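(* Let $G$ be a digraph with a fixed upward planar drawing and let $\mathcal{P}$ be a set of pairwise vertex disjoint directed paths in $G$. Then $\prec^*_{\mathcal{P}}$ is a partial order on $\mathcal{P}$.
   Context: An upward planar drawing of a digraph is a plane drawing (no edge crossings) in which every directed edge is a curve monotone increasing in the $y$-direction from tail to head. A path is identified with the set of points of $\mathbb{R}^2$ in its drawing. For a path $P$ with endpoints $(x,y)$, $(x',y')$, $y\le y'$, let $\mathrm{Right}(P):=\{(u,v)\in\mathbb{R}^2: y\le v\le y',\ u'<u \text{ for all } u' \text{ with } (u',v)\in P\}$. A point $p\notin P$ is to the right of $P$ if $p\in\mathrm{Right}(P)$. For vertex disjoint paths $P,Q$, write $Q\prec P$ if some point of $P$ is to the right of $Q$. $\prec^*$ is the transitive closure of $\prec$, and $\prec^*_{\mathcal{P}}$ is the transitive closure of $\prec$ restricted to the paths in $\mathcal{P}$. *)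

(* Defs.v *)
From Stdlib Require Import Reals List Relations RelationClasses.
Import ListNotations.
Open Scope R_scope.

Record digraph := {
  vert : Type;
  edge : Type;
  src : edge -> vert;
  tgt : edge -> vert;
  vert_finite : exists l : list vert, forall v, In v l;
  edge_finite : exists l : list edge, forall e, In e l
}.

Definition point := (R * R)%type.

Record upward_planar_drawing (G : digraph) := {
  pos : vert G -> point;
  crv : edge G -> R -> point;
  pos_inj : forall u v, pos u = pos v -> u = v;
  crv_src : forall e, crv e 0 = pos (src G e);
  crv_tgt : forall e, crv e 1 = pos (tgt G e);
  crv_cont : forall e t, 0 <= t <= 1 ->
     continuity_pt (fun s => fst (crv e s)) t /\
     continuity_pt (fun s => snd (crv e s)) t;
  crv_upward : forall e s t, 0 <= s -> s < t -> t <= 1 ->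
     snd (crv e s) < snd (crv e t);
  crv_noncross : forall e e' s t, e <> e' -> 0 <= s <= 1 -> 0 <= t <= 1 ->
     crv e s = crv e' t -> (s = 0 \/ s = 1) /\ (t = 0 \/ t = 1);
  crv_novertex : forall e v t, 0 < t < 1 -> crv e t <> pos v
}.

Arguments pos {G} _ _.
Arguments crv {G} _ _ _.

(* A (candidate) directed path: start vertex and list of successive edges. *)
Record dpath (G : digraph) := mkPath { pstart : vert G; pedges : list (edge G) }.
Arguments mkPath {G} _ _.
Arguments pstart {G} _.
Arguments pedges {G} _.

Fixpoint chain (G : digraph) (v : vert G) (es : list (edge G)) : Prop :=
  match es with
  | [] => True
  | e :: es' => src G e = v /\ chain G (tgt G e) es'
  end.

Definition pverts {G : digraph} (P : dpath G) : list (vert G) :=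
  pstart P :: map (tgt G) (pedges P).

Definition pend {G : digraph} (P : dpath G) : vert G :=
  last (map (tgt G) (pedges P)) (pstart P).

Definition is_dpath {G : digraph} (P : dpath G) : Prop :=
  chain G (pstart P) (pedges P) /\ NoDup (pverts P).

Definition vdisjoint {G : digraph} (P Q : dpath G) : Prop :=
  forall v, In v (pverts P) -> ~ In v (pverts Q).

Definition pts {G : digraph} (D : upward_planar_drawing G) (P : dpath G)
  (p : point) : Prop :=
  p = pos D (pstart P) \/
  exists e, In e (pedges P) /\ exists t, 0 <= t <= 1 /\ p = crv D e t.

Definition RightSet {G : digraph} (D : upward_planar_drawing G) (P : dpath G)
  (p : point) : Prop :=
  let y1 := snd (pos D (pstart P)) in
  let y2 := snd (pos D (pend P)) in
  Rmin y1 y2 <= snd p <= Rmax y1 y2 /\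
  forall q, pts D P q -> snd q = snd p -> fst q < fst p.

Definition right_of {G : digraph} (D : upward_planar_drawing G) (P : dpath G)
  (p : point) : Prop :=
  ~ pts D P p /\ RightSet D P p.

Definition prec {G : digraph} (D : upward_planar_drawing G) (Q P : dpath G)
  : Prop :=
  vdisjoint Q P /\ exists p, pts D P p /\ right_of D Q p.

Definition prec_in {G : digraph} (D : upward_planar_drawing G)
  (PP : dpath G -> Prop) (Q P : dpath G) : Prop :=
  PP Q /\ PP P /\ prec D Q P.

Definition prec_star_in {G : digraph} (D : upward_planar_drawing G)
  (PP : dpath G -> Prop) : relation (dpath G) :=
  clos_trans (dpath G) (prec_in D PP).

(* Main.v *)
From Stdlib Require Import Reals List Relations RelationClasses Lra Lia Classical ClassicalEpsilon.
Require Import Defs.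
Import ListNotations.
Open Scope R_scope.

Definition clamp (lo hi y : R) := Rmax lo (Rmin hi y).

Lemma clamp_in lo hi y : lo <= hi -> lo <= clamp lo hi y <= hi.
Proof. unfold clamp, Rmax, Rmin; intros; repeat destruct Rle_dec; lra. Qed.
Lemma clamp_id lo hi y : lo <= y <= hi -> clamp lo hi y = y.
Proof. unfold clamp, Rmax, Rmin; intros; repeat destruct Rle_dec; lra. Qed.
Lemma clamp_lip lo hi y z : lo <= hi -> Rabs (clamp lo hi y - clamp lo hi z) <= Rabs (y - z).
Proof. unfold clamp, Rmax, Rmin; intros; repeat destruct Rle_dec; unfold Rabs;
  repeat destruct Rcase_abs; lra. Qed.

Definition rcont (f : R -> R) lo hi := forall y0, lo <= y0 <= hi -> forall eps, 0 < eps ->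
  exists del, 0 < del /\ forall y, lo <= y <= hi -> Rabs (y - y0) < del -> Rabs (f y - f y0) < eps.

Lemma clamp_cont f lo hi : lo <= hi -> rcont f lo hi -> continuity (fun y => f (clamp lo hi y)).
Proof.
  intros Hle Hc y0. unfold continuity_pt, continue_in, limit1_in, limit_in. simpl. unfold R_dist.
  intros eps Heps. destruct (Hc (clamp lo hi y0) (clamp_in _ _ _ Hle) eps Heps) as [del [Hd H]].
  exists del; split; auto. intros y [_ Hy]. apply H. apply clamp_in; auto.
  eapply Rle_lt_trans; [apply clamp_lip; auto| exact Hy].
Qed.

Lemma rcont_sub f lo hi lo' hi' : lo <= lo' -> hi' <= hi -> rcont f lo hi -> rcont f lo' hi'.
Proof.
  intros H1 H2 Hc y0 Hy0 eps He. destruct (Hc y0 ltac:(lra) eps He) as [d [Hd H]].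
  exists d; split; auto. intros y Hy Hyd; apply H; auto; lra.
Qed.

Lemma rcont_minus f g lo hi : rcont f lo hi -> rcont g lo hi -> rcont (fun y => f y - g y) lo hi.
Proof.
  intros Hf Hg y0 Hy0 eps He.
  destruct (Hf y0 Hy0 (eps/2) ltac:(lra)) as [d1 [Hd1 H1]].
  destruct (Hg y0 Hy0 (eps/2) ltac:(lra)) as [d2 [Hd2 H2]].
  exists (Rmin d1 d2); split. apply Rmin_pos; auto.
  intros y Hy Hyd. assert (A1 := H1 y Hy ltac:(apply Rlt_le_trans with (1:=Hyd); apply Rmin_l)).
  assert (A2 := H2 y Hy ltac:(apply Rlt_le_trans with (1:=Hyd); apply Rmin_r)).
  revert A1 A2. unfold Rabs; repeat destruct Rcase_abs; lra.
Qed.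

Lemma rivt f lo hi y1 y2 : rcont f lo hi -> lo <= y1 <= hi -> lo <= y2 <= hi ->
  f y1 * f y2 <= 0 -> exists z, lo <= z <= hi /\ f z = 0.
Proof.
  intros Hc H1 H2 Hp.
  assert (Hle : lo <= hi) by lra.
  pose proof (clamp_cont f lo hi Hle Hc) as C.
  destruct (Rle_dec y1 y2).
  - destruct (IVT_cor _ y1 y2 C r) as [z [Hz Hfz]].
    { rewrite !clamp_id by lra. exact Hp. }
    exists z; split; [lra|]. rewrite clamp_id in Hfz by lra. exact Hfz.
  - destruct (IVT_cor _ y2 y1 C ltac:(lra)) as [z [Hz Hfz]].
    { rewrite !clamp_id by lra. rewrite Rmult_comm. exact Hp. }
    exists z; split; [lra|]. rewrite clamp_id in Hfz by lra. exact Hfz.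
Qed.

Definition MA (S : point -> Prop) (a b : R) (X : R -> R) : Prop :=
  a <= b /\
  (forall p, S p -> a <= snd p <= b /\ fst p = X (snd p)) /\
  (forall y, a <= y <= b -> S (X y, y)) /\
  rcont X a b.

Lemma MA_ext S S' a b X : (forall p, S p <-> S' p) -> MA S a b X -> MA S' a b X.
Proof.
  intros E [H1 [H2 [H3 H4]]]; repeat split; auto.
  - apply H2, E; auto.
  - apply H2, E; auto.
  - apply H2, E; auto.
  - intros; apply E; auto.
Qed.

Lemma MA_glue S1 S2 a b c X1 X2 : MA S1 a b X1 -> MA S2 b c X2 -> X1 b = X2 b ->
  MA (fun p => S1 p \/ S2 p) a c (fun y => if Rle_dec y b then X1 y else X2 y).
Proof.
  intros [A1 [B1 [C1 D1]]] [A2 [B2 [C2 D2]]] E.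
  split; [lra|]. split; [|split].
  - intros p [Hp|Hp].
    + destruct (B1 p Hp) as [Hr Hx]. split; [lra|]. destruct Rle_dec; [auto|lra].
    + destruct (B2 p Hp) as [Hr Hx]. split; [lra|]. destruct Rle_dec; [|auto].
      assert (snd p = b) by lra. rewrite H, E. rewrite H in Hx. auto.
  - intros y Hy. destruct Rle_dec; [left; apply C1; lra| right; apply C2; lra].
  - intros y0 Hy0 eps He.
    destruct (Rtotal_order y0 b) as [Hlt|[Heq|Hgt]].
    + destruct (D1 y0 ltac:(lra) eps He) as [d [Hd H]].
      exists (Rmin d (b - y0)); split. apply Rmin_pos; lra.
      intros y Hy Hyd. pose proof (Rmin_l d (b-y0)). pose proof (Rmin_r d (b-y0)).
      assert (y < b). { revert Hyd; unfold Rabs; destruct Rcase_abs; lra. }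
      destruct (Rle_dec y b); [|lra]. destruct (Rle_dec y0 b); [|lra].
      apply H; [lra|lra].
    + subst y0. destruct (D1 b ltac:(lra) eps He) as [d1 [Hd1 H1]].
      destruct (D2 b ltac:(lra) eps He) as [d2 [Hd2 H2]].
      exists (Rmin d1 d2); split. apply Rmin_pos; lra.
      intros y Hy Hyd. pose proof (Rmin_l d1 d2). pose proof (Rmin_r d1 d2).
      destruct (Rle_dec b b); [|lra].
      destruct (Rle_dec y b).
      * apply H1; lra.
      * rewrite E. apply H2; lra.
    + destruct (D2 y0 ltac:(lra) eps He) as [d [Hd H]].
      exists (Rmin d (y0 - b)); split. apply Rmin_pos; lra.
      intros y Hy Hyd. pose proof (Rmin_l d (y0-b)). pose proof (Rmin_r d (y0-b)).
      assert (y > b). { revert Hyd; unfold Rabs; destruct Rcase_abs; lra. }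
      destruct (Rle_dec y b); [lra|]. destruct (Rle_dec y0 b); [lra|].
      apply H; lra.
Qed.

Lemma cpt_rcont f lo hi : (forall t, lo <= t <= hi -> continuity_pt f t) -> rcont f lo hi.
Proof.
  intros H y0 Hy0 eps He. specialize (H y0 Hy0).
  unfold continuity_pt, continue_in, limit1_in, limit_in in H. simpl in H. unfold R_dist in H.
  destruct (H eps He) as [d [Hd H']]. exists d; split; auto.
  intros y _ Hy. destruct (Req_dec y y0). subst; rewrite Rminus_diag, Rabs_R0; lra. apply H'. split; auto. unfold D_x, no_cond; split; auto.

Qed.


Definition eset {G} (D : upward_planar_drawing G) e (p : point) :=
  exists t, 0 <= t <= 1 /\ p = crv D e t.

Lemma h_le {G} (D : upward_planar_drawing G) e s t : 0 <= s -> s <= t -> t <= 1 ->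
  snd (crv D e s) <= snd (crv D e t).
Proof.
  intros. destruct (Req_dec s t). subst; lra.
  left; apply crv_upward; lra.
Qed.

Lemma h_inj {G} (D : upward_planar_drawing G) e s t : 0 <= s <= 1 -> 0 <= t <= 1 ->
  snd (crv D e s) = snd (crv D e t) -> s = t.
Proof.
  intros. destruct (Rtotal_order s t) as [H2|[H2|H2]]; auto.
  - pose proof (crv_upward G D e s t ltac:(lra) H2 ltac:(lra)); lra.
  - pose proof (crv_upward G D e t s ltac:(lra) H2 ltac:(lra)); lra.
Qed.

Lemma edge_MA {G} (D : upward_planar_drawing G) e :
  exists X, MA (eset D e) (snd (crv D e 0)) (snd (crv D e 1)) X.
Proof.
  set (h := fun t => snd (crv D e t)).
  set (x := fun t => fst (crv D e t)).
  change (exists X, MA (eset D e) (h 0) (h 1) X).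
  assert (Hh : rcont h 0 1).
  { apply cpt_rcont. intros t Ht. apply (crv_cont G D e t Ht). }
  assert (Hx : rcont x 0 1).
  { apply cpt_rcont. intros t Ht. apply (crv_cont G D e t Ht). }
  assert (H01 : h 0 < h 1) by (apply crv_upward; lra).
  assert (Hex : forall y, h 0 <= y <= h 1 -> exists t, 0 <= t <= 1 /\ h t = y).
  { intros y Hy.
    destruct (rivt (fun t => h t - y) 0 1 0 1) as [z [Hz Hfz]].
    - apply rcont_minus; auto. intros y0 _ eps He; exists 1; split; [lra|].
      intros; rewrite Rminus_diag, Rabs_R0; lra.
    - lra. - lra.
    - assert (h 0 - y <= 0) by lra. assert (0 <= h 1 - y) by lra.
      rewrite <- (Rmult_0_r (h 0 - y)) at 2.
      apply Rmult_le_compat_neg_l; lra.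
    - exists z; split; auto; lra. }
  set (tau := fun y => epsilon (inhabits 0) (fun t => 0 <= t <= 1 /\ h t = y)).
  assert (Htau : forall y, h 0 <= y <= h 1 -> 0 <= tau y <= 1 /\ h (tau y) = y).
  { intros y Hy. unfold tau. apply epsilon_spec. apply Hex; auto. }
  assert (Htau_h : forall t, 0 <= t <= 1 -> tau (h t) = t).
  { intros t Ht. assert (h 0 <= h t <= h 1) by (unfold h; split; apply h_le; lra).
    destruct (Htau _ H) as [A B]. apply (h_inj D e); auto. }
  exists (fun y => x (tau y)).
  split; [lra|]. split; [|split].
  - intros p [t [Ht ->]]. split. unfold h in *; split; apply h_le; lra.
    fold (h t). rewrite Htau_h; auto.
  - intros y Hy. destruct (Htau y Hy) as [A B]. exists (tau y); split; auto.
    unfold x. rewrite <- B at 2. unfold h. destruct (crv D e (tau y)); reflexivity.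
  - intros y0 Hy0 eps He.
    destruct (Htau y0 Hy0) as [T0 E0]. set (t0 := tau y0) in *.
    destruct (Hx t0 T0 eps He) as [eta [Heta Hxe]].
    assert (L : exists d1, 0 < d1 /\ forall y, h 0 <= y <= h 1 -> y0 - d1 < y -> t0 - eta/2 <= tau y).
    { destruct (Rle_dec (t0 - eta/2) 0).
      - exists 1; split; [lra|]. intros y Hy _. destruct (Htau y Hy); lra.
      - assert (h (t0 - eta/2) < h t0) by (apply crv_upward; lra).
        exists (y0 - h (t0 - eta/2)); split; [lra|]. intros y Hy Hy'.
        destruct (Htau y Hy) as [A B].
        destruct (Rle_dec (t0 - eta/2) (tau y)); auto.
        assert (h (tau y) < h (t0 - eta/2)) by (apply crv_upward; lra). lra. }
    assert (U : exists d2, 0 < d2 /\ forall y, h 0 <= y <= h 1 -> y < y0 + d2 -> tau y <= t0 + eta/2).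
    { destruct (Rle_dec 1 (t0 + eta/2)).
      - exists 1; split; [lra|]. intros y Hy _. destruct (Htau y Hy); lra.
      - assert (h t0 < h (t0 + eta/2)) by (apply crv_upward; lra).
        exists (h (t0 + eta/2) - y0); split; [lra|]. intros y Hy Hy'.
        destruct (Htau y Hy) as [A B].
        destruct (Rle_dec (tau y) (t0 + eta/2)); auto.
        assert (h (t0 + eta/2) < h (tau y)) by (apply crv_upward; lra). lra. }
    destruct L as [d1 [Hd1 L]]. destruct U as [d2 [Hd2 U]].
    exists (Rmin d1 d2); split. apply Rmin_pos; lra.
    intros y Hy Hyd. pose proof (Rmin_l d1 d2). pose proof (Rmin_r d1 d2).
    assert (Hyd' : y0 - d1 < y /\ y < y0 + d2).
    { revert Hyd; unfold Rabs; destruct Rcase_abs; lra. }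
    pose proof (L y Hy ltac:(lra)). pose proof (U y Hy ltac:(lra)).
    destruct (Htau y Hy).
    apply Hxe; auto. unfold Rabs; destruct Rcase_abs; lra.
Qed.

Lemma last_cons_ne {A} (x : A) l d : last (x :: l) d = last l x.
Proof.
  revert x d; induction l as [|y l IH]; intros x d; simpl; auto.
  change (last (y::l) d = last (y::l) x). rewrite (IH y d), (IH y x). reflexivity.
Qed.

Lemma path_MA {G} (D : upward_planar_drawing G) es : forall v, chain G v es ->
  exists X, MA (pts D (mkPath v es)) (snd (pos D v)) (snd (pos D (pend (mkPath v es)))) X.
Proof.
  induction es as [|e es IH]; intros v Hc.
  - exists (fun _ => fst (pos D v)). unfold pend; simpl.
    split; [lra|]. split; [|split].
    + intros p [->|[e [[] _]]]; simpl. split; [lra|reflexivity].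
    + intros y Hy. left. assert (y = snd (pos D v)) by lra. subst.
      simpl. destruct (pos D v); reflexivity.
    + intros y0 _ eps He; exists 1; split; [lra|]. intros; rewrite Rminus_diag, Rabs_R0; lra.
  - destruct Hc as [Hs Hc]. destruct (IH _ Hc) as [X2 H2].
    destruct (edge_MA D e) as [X1 H1].
    rewrite crv_src, crv_tgt, Hs in H1.
    assert (Hend : pend (mkPath v (e :: es)) = pend (mkPath (tgt G e) es)).
    { unfold pend; simpl. apply last_cons_ne. }
    rewrite Hend.
    eexists. eapply MA_ext; [|apply (MA_glue _ _ _ _ _ _ _ H1 H2)].
    + intros p; symmetry; split.
      * intros [Hp|[f [Hf [t [Ht ->]]]]].
        -- left. exists 0. split; [lra|]. rewrite Hp, crv_src, Hs; reflexivity.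
        -- destruct Hf as [<-|Hf]. left; exists t; auto.
           right. right. exists f; split; auto. exists t; auto.
      * intros [[t [Ht ->]]|[->|[f [Hf [t [Ht ->]]]]]].
        -- right. exists e; split; [left; auto|]. exists t; auto.
        -- right. exists e; split; [left; auto|]. exists 1; split; [lra|]. rewrite crv_tgt; auto.
        -- right. exists f; split; [right; auto|]. exists t; auto.
    + destruct H1 as [_ [B1 [C1 _]]]. destruct H2 as [_ [B2 [C2 _]]].
      assert (E1 : eset D e (pos D (tgt G e))). { exists 1; split; [lra|]. rewrite crv_tgt; auto. }
      assert (E2 : pts D (mkPath (tgt G e) es) (pos D (tgt G e))). { left; reflexivity. }
      destruct (B1 _ E1) as [_ F1]. destruct (B2 _ E2) as [_ F2]. congruence.
Qed.

Inductive chn {T : Type} (Rl : T -> T -> Prop) : list T -> Prop :=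
| chn1 x : chn Rl [x]
| chn2 x y l : Rl x y -> chn Rl (y :: l) -> chn Rl (x :: y :: l).

Lemma chn_app {T} (Rl : T -> T -> Prop) X y Y :
  chn Rl (X ++ [y]) -> chn Rl (y :: Y) -> chn Rl (X ++ y :: Y).
Proof.
  induction X as [|x X IH]; simpl; intros H1 H2; auto.
  destruct X as [|x' X']; simpl in *.
  - inversion H1; subst. constructor; auto.
  - inversion H1; subst. constructor; auto.
Qed.

Lemma chn_app_inv {T} (Rl : T -> T -> Prop) X y Y :
  chn Rl (X ++ y :: Y) -> chn Rl (X ++ [y]) /\ chn Rl (y :: Y).
Proof.
  induction X as [|x X IH]; simpl; intros H.
  - split; auto. constructor.
  - destruct X as [|x' X']; simpl in *.
    + inversion H; subst. split; auto. constructor; auto. constructor.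
    + inversion H; subst. destruct (IH H4). split; auto. constructor; auto.
Qed.

Lemma ct_chn {T} (Rl : T -> T -> Prop) x y : clos_trans T Rl x y -> exists l, chn Rl (x :: l ++ [y]).
Proof.
  induction 1 as [x y H|x y z _ [l1 H1] _ [l2 H2]].
  - exists []. simpl. constructor; auto. constructor.
  - exists (l1 ++ y :: l2).
    replace (x :: (l1 ++ y :: l2) ++ [z]) with ((x :: l1) ++ y :: l2 ++ [z])
      by (simpl; rewrite <- app_assoc; reflexivity).
    apply chn_app; auto.
Qed.

Lemma list_min {T} (b : T -> R) (L : list T) d :
  exists m, In m (d :: L) /\ forall z, In z (d :: L) -> b m <= b z.
Proof.
  revert d; induction L as [|x L IH]; intros d.
  - exists d; split; [left; auto|]. intros z [<-|[]]; lra.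
  - destruct (IH x) as [m [Hm Hmin]].
    destruct (Rle_dec (b d) (b m)).
    + exists d; split; [left; auto|]. intros z [<-|Hz]; [lra|]. specialize (Hmin z Hz); lra.
    + exists m; split; [right; auto|]. intros z [<-|Hz]; [lra|]. auto.
Qed.

Lemma chain_main {T : Type} (Rl : T -> T -> Prop) (a b : T -> R)
  (Hab : forall x y, Rl x y -> a x <= b x /\ a y <= b y)
  (Hov : forall x y, Rl x y -> exists z, a x <= z <= b x /\ a y <= z <= b y)
  (HT : forall p m q z, Rl p m -> Rl m q -> a p <= z <= b p -> a m <= z <= b m ->
        a q <= z <= b q -> Rl p q) :
  forall n l A B, (length l < n)%nat -> chn Rl (A :: l ++ [B]) ->
    (exists z, a A <= z <= b A /\ a B <= z <= b B) -> Rl A B.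
Proof.
  induction n as [|n IHn]; intros l A B Hlen Hc Hov0; [lia|].
  destruct (list_min b (l ++ [B]) A) as [m [Hm Hmin]].
  assert (HA : In A (A :: l ++ [B])) by (left; auto).
  assert (HB : In B (A :: l ++ [B])) by (right; apply in_or_app; right; left; auto).
  destruct Hov0 as [z0 [Hz0A Hz0B]].
  destruct Hm as [Hm|Hm]; [|apply in_app_or in Hm; destruct Hm as [Hm|[Hm|[]]]].
  -
    subst m. destruct l as [|C1 l0].
    + simpl in Hc. inversion Hc; auto.
    + simpl in Hc. inversion Hc; subst.
      assert (HC1 : In C1 (A :: (C1 :: l0) ++ [B])) by (right; left; auto).
      pose proof (Hmin _ HC1). pose proof (Hmin _ HB).
      destruct (Hov _ _ H1) as [z1 [Hz1 Hz1']]. destruct (Hab _ _ H1).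
      assert (Rl C1 B).
      { apply (IHn l0); [simpl in Hlen; lia| auto |].
        exists (b A). split; lra. }
      apply (HT A C1 B (b A)); auto; lra.
  -
    apply in_split in Hm. destruct Hm as [l1 [l2 ->]].
    assert (Hne : A :: l1 <> []) by discriminate.
    destruct (exists_last Hne) as [X [p HX]].
    assert (Hp : In p (A :: (l1 ++ m :: l2) ++ [B])).
    { assert (In p (A :: l1)) by (rewrite HX; apply in_or_app; right; left; auto).
      destruct H as [H|H]; [left; auto|]. right. apply in_or_app; left; apply in_or_app; left; auto. }
    assert (Heq : A :: (l1 ++ m :: l2) ++ [B] = X ++ p :: m :: (l2 ++ [B])).
    { rewrite <- app_assoc. simpl. change (A :: l1 ++ m :: l2 ++ [B] = X ++ p :: m :: l2 ++ [B]).
      change (A :: l1 ++ m :: l2 ++ [B]) with ((A :: l1) ++ m :: l2 ++ [B]). rewrite HX.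
      rewrite <- app_assoc. reflexivity. }
    rewrite Heq in Hc. apply chn_app_inv in Hc. destruct Hc as [Hc1 Hc2].
    inversion Hc2; subst.
    destruct l2 as [|q l2']; simpl in *.
    + inversion H3; subst.
      pose proof (Hmin _ Hp). pose proof (Hmin _ HB).
      destruct (Hov _ _ H1) as [z1 [Hz1 Hz1']]. destruct (Hab _ _ H1).
      destruct (Hov _ _ H2) as [z2 [Hz2 Hz2']].
      assert (Rl p B) by (apply (HT p m B (b m)); auto; lra).
      apply (IHn l1); [rewrite length_app in Hlen; simpl in Hlen; lia| |exists z0; auto].
      change (chn Rl ((A :: l1) ++ [B])). rewrite HX, <- app_assoc. apply chn_app; auto. constructor; auto.
    + inversion H3; subst.
      assert (Hq : In q (A :: (l1 ++ m :: q :: l2') ++ [B])).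
      { right. apply in_or_app; left; apply in_or_app; right; right; left; auto. }
      pose proof (Hmin _ Hp). pose proof (Hmin _ Hq).
      destruct (Hov _ _ H1) as [z1 [Hz1 Hz1']]. destruct (Hab _ _ H1).
      destruct (Hov _ _ H2) as [z2 [Hz2 Hz2']].
      assert (Rl p q) by (apply (HT p m q (b m)); auto; lra).
      apply (IHn (l1 ++ q :: l2')); [rewrite !length_app in *; simpl in *; lia| |exists z0; auto].
      change (chn Rl ((A :: l1 ++ q :: l2') ++ [B])).
      replace ((A :: l1 ++ q :: l2') ++ [B]) with ((A :: l1) ++ q :: l2' ++ [B])
        by (simpl; rewrite <- app_assoc; reflexivity).
      rewrite HX, <- app_assoc. simpl. apply chn_app; auto. constructor; auto.
  -
    subst m. destruct l as [|c l].
    + simpl in Hc. inversion Hc; auto.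
    + assert (Hne : c :: l <> []) by discriminate.
      destruct (exists_last Hne) as [l0 [Cr HX]]. rewrite HX in Hc, Hlen, Hmin.
      replace (A :: (l0 ++ [Cr]) ++ [B]) with ((A :: l0) ++ Cr :: [B]) in Hc
        by (simpl; rewrite <- app_assoc; reflexivity).
      apply chn_app_inv in Hc. destruct Hc as [Hc1 Hc2]. inversion Hc2; subst.
      assert (HCr : In Cr (A :: (l0 ++ [Cr]) ++ [B])).
      { right. apply in_or_app; left; apply in_or_app; right; left; auto. }
      pose proof (Hmin _ HCr). pose proof (Hmin A (or_introl eq_refl)).
      destruct (Hov _ _ H1) as [z1 [Hz1 Hz1']]. destruct (Hab _ _ H1).
      assert (Rl A Cr).
      { apply (IHn l0); [rewrite length_app in Hlen; simpl in Hlen; lia| auto |].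
        exists (b B). split; lra. }
      apply (HT A Cr B (b B)); auto; lra.
Qed.

Lemma chain_src {G} es : forall v e, chain G v es -> In e es -> In (src G e) (v :: map (tgt G) es).
Proof.
  induction es as [|f es IH]; intros v e Hc Hin; [destruct Hin|].
  destruct Hc as [Hs Hc]. destruct Hin as [<-|Hin].
  - left; auto.
  - right. apply (IH _ _ Hc Hin).
Qed.

Lemma pts_class {G} (D : upward_planar_drawing G) P p : chain G (pstart P) (pedges P) ->
  pts D P p -> (exists u, In u (pverts P) /\ p = pos D u) \/
  (exists e, In e (pedges P) /\ exists t, 0 < t < 1 /\ p = crv D e t).
Proof.
  intros Hc [->|[e [He [t [Ht ->]]]]].
  - left. exists (pstart P); split; [left|]; auto.
  - destruct (Req_dec t 0) as [->|H0]; [|destruct (Req_dec t 1) as [->|H1]].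
    + left. exists (src G e). split. apply (chain_src _ _ _ Hc He). apply crv_src.
    + left. exists (tgt G e). split. right. apply in_map; auto. apply crv_tgt.
    + right. exists e; split; auto. exists t; split; auto; lra.
Qed.

Lemma pts_disj {G} (D : upward_planar_drawing G) P Q p :
  chain G (pstart P) (pedges P) -> chain G (pstart Q) (pedges Q) -> vdisjoint P Q ->
  pts D P p -> pts D Q p -> False.
Proof.
  intros HcP HcQ Hd HP HQ.
  destruct (pts_class D P p HcP HP) as [[u [Hu ->]]|[e [He [s [Hs ->]]]]];
  destruct (pts_class D Q _ HcQ HQ) as [[w [Hw Hw']]|[f [Hf [t [Ht Ht']]]]].
  - apply pos_inj in Hw'. subst. apply (Hd w); auto.
  - apply (crv_novertex G D f u t Ht). auto.
  - apply (crv_novertex G D e w s Hs). auto.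
  - destruct (classic (e = f)) as [<-|Hne].
    + apply (Hd (tgt G e)); right; apply in_map; auto.
    + destruct (crv_noncross G D e f s t Hne ltac:(lra) ltac:(lra) Ht') as [[H|H] _]; lra.
Qed.

Lemma vdisj_irrefl {G} (P : dpath G) : ~ vdisjoint P P.
Proof. intros H. apply (H (pstart P)); left; auto. Qed.

Theorem lemma8 (G : digraph) (D : upward_planar_drawing G)
  (PP : dpath G -> Prop)
  (Hpaths : forall P, PP P -> is_dpath P)
  (Hdisj : forall P Q, PP P -> PP Q -> P <> Q -> vdisjoint P Q) :
  StrictOrder (prec_star_in D PP).
Proof.
  set (aP := fun P : dpath G => snd (pos D (pstart P))).
  set (bP := fun P : dpath G => snd (pos D (pend P))).
  assert (HX : forall P, exists X, is_dpath P -> MA (pts D P) (aP P) (bP P) X).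
  { intros P. destruct (classic (is_dpath P)) as [Hd|Hd].
    - destruct P as [v es]. destruct (path_MA D es v (proj1 Hd)) as [X HXm].
      exists X; intros _; exact HXm.
    - exists (fun _ => 0); intros H; contradiction. }
  set (Xf := fun P => epsilon (inhabits (fun _ : R => 0))
                        (fun X => is_dpath P -> MA (pts D P) (aP P) (bP P) X)).
  assert (HM : forall P, PP P -> MA (pts D P) (aP P) (bP P) (Xf P)).
  { intros P HP. unfold Xf. apply (epsilon_spec _ _ (HX P)). apply Hpaths; auto. }
  clearbody Xf.
  assert (Hch : forall P, PP P -> chain G (pstart P) (pedges P)).
  { intros P HP; apply (Hpaths P HP). }
  assert (Hprec : forall Q P, prec_in D PP Q P -> exists y,
     aP Q <= y <= bP Q /\ aP P <= y <= bP P /\ Xf Q y < Xf P y).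
  { intros Q P [HQ [HP [Hd [p [Hp [Hnp [Hr Hall]]]]]]].
    destruct (HM Q HQ) as [AQ [BQ [CQ DQ]]]. destruct (HM P HP) as [AP [BP [CP DP]]].
    fold (aP Q) (bP Q) in Hr. rewrite Rmin_left, Rmax_right in Hr by lra.
    exists (snd p). destruct (BP p Hp) as [Hpr Hpx].
    split; [lra|]. split; [lra|].
    pose proof (Hall _ (CQ (snd p) Hr) eq_refl). simpl in H. lra. }
  assert (Hcons : forall Q P y1 y2, PP Q -> PP P -> Q <> P ->
     aP Q <= y1 <= bP Q -> aP P <= y1 <= bP P ->
     aP Q <= y2 <= bP Q -> aP P <= y2 <= bP P ->
     Xf Q y1 < Xf P y1 -> Xf Q y2 < Xf P y2).
  { intros Q P y1 y2 HQ HP Hne H1Q H1P H2Q H2P Hlt.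
    destruct (Rlt_dec (Xf Q y2) (Xf P y2)) as [|Hn]; auto. exfalso.
    destruct (HM Q HQ) as [AQ [BQ [CQ DQ]]]. destruct (HM P HP) as [AP [BP [CP DP]]].
    destruct (rivt (fun y => Xf P y - Xf Q y) (Rmax (aP Q) (aP P)) (Rmin (bP Q) (bP P)) y1 y2)
      as [z [Hz Hfz]].
    - apply rcont_minus; (eapply rcont_sub; [| |eauto]); 
        first [apply Rmax_r | apply Rmax_l | apply Rmin_r | apply Rmin_l].
    - split; [apply Rmax_lub | apply Rmin_glb]; lra.
    - split; [apply Rmax_lub | apply Rmin_glb]; lra.
    - assert (0 < Xf P y1 - Xf Q y1) by lra. assert (Xf P y2 - Xf Q y2 <= 0) by lra.
      rewrite <- (Rmult_0_r (Xf P y1 - Xf Q y1)).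
      apply Rmult_le_compat_l; lra.
    - assert (Hz1 : aP Q <= z <= bP Q /\ aP P <= z <= bP P).
      { pose proof (Rmax_l (aP Q) (aP P)). pose proof (Rmax_r (aP Q) (aP P)).
        pose proof (Rmin_l (bP Q) (bP P)). pose proof (Rmin_r (bP Q) (bP P)). lra. }
      apply (pts_disj D Q P (Xf Q z, z) (Hch Q HQ) (Hch P HP) (Hdisj Q P HQ HP Hne)).
      + apply CQ; tauto.
      + replace (Xf Q z) with (Xf P z) by lra. apply CP; tauto. }
  assert (Hmk : forall Q P y, PP Q -> PP P -> Q <> P ->
     aP Q <= y <= bP Q -> aP P <= y <= bP P -> Xf Q y < Xf P y -> prec_in D PP Q P).
  { intros Q P y HQ HP Hne HyQ HyP Hlt.
    destruct (HM Q HQ) as [AQ [BQ [CQ DQ]]]. destruct (HM P HP) as [AP [BP [CP DP]]].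
    split; auto. split; auto. split; [apply Hdisj; auto|].
    exists (Xf P y, y). split; [apply CP; auto|]. split.
    - intros Hq. destruct (BQ _ Hq) as [_ Hx]. simpl in Hx. lra.
    - unfold RightSet. fold (aP Q) (bP Q). rewrite Rmin_left, Rmax_right by lra.
      split; [simpl; lra|]. intros q Hq Hqy. destruct (BQ _ Hq) as [_ Hx]. simpl in *.
      rewrite Hx, Hqy. lra. }
  assert (Hneq : forall Q P, prec_in D PP Q P -> Q <> P).
  { intros Q P [_ [_ [Hd _]]] ->. apply (vdisj_irrefl P Hd). }
  split.
  - intros A HA. unfold prec_star_in in HA. destruct (ct_chn _ _ _ HA) as [l Hl].
    assert (HAA : prec_in D PP A A).
    { apply (chain_main (prec_in D PP) aP bP) with (n := S (length l)) (l := l); auto.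
      - intros x y [Hx [Hy _]]. destruct (HM x Hx) as [Ax _]. destruct (HM y Hy) as [Ay _]. auto.
      - intros x y H. destruct (Hprec x y H) as [z [Hz1 [Hz2 _]]]. eauto.
      - intros p m q z Hpm Hmq Hp Hm Hq.
        destruct Hpm as [Pp [Pm Hpm']]. destruct Hmq as [Pm' [Pq Hmq']].
        assert (Hpm : prec_in D PP p m) by (split; auto).
        assert (Hmq : prec_in D PP m q) by (split; auto).
        destruct (Hprec _ _ Hpm) as [y1 [Y1 [Y1' L1]]].
        destruct (Hprec _ _ Hmq) as [y2 [Y2 [Y2' L2]]].
        pose proof (Hcons p m y1 z Pp Pm (Hneq _ _ Hpm) Y1 Y1' Hp Hm L1).
        pose proof (Hcons m q y2 z Pm Pq (Hneq _ _ Hmq) Y2 Y2' Hm Hq L2).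
        apply (Hmk p q z); auto; [|lra].
        intros ->; lra.
      - assert (PA : PP A).
        { assert (Hg : forall x y, clos_trans _ (prec_in D PP) x y -> PP x).
          { induction 1 as [x y [Hx _]|x y w _ IH _ _]; auto. }
          exact (Hg _ _ HA). }
        destruct (HM A PA) as [AA _]. exists (bP A); split; lra. }
    apply (Hneq _ _ HAA); auto.
  - intros x y z H1 H2. eapply t_trans; eauto.
Qed.
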